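(* Let $\mathcal{N}$ be an acyclic, deterministic, sound negotiation, and let $m,n$ be two nodes with $\mathit{dom}(m)\cap\mathit{dom}(n)=\emptyset$. Then $m\parallel n$ if and only if there exists a run from $C_{\mathit{init}}$ containing both $m$ and $n$, and there is neither a local path from $m$ to $n$ nor a local path from $n$ to $m$.
   Context: A negotiation is a tuple $\mathcal{N}=(\mathit{Proc},N,\mathit{dom},R,\delta)$ where $\mathit{Proc}$ is a finite set of processes, $N$ is a finite set of nodes, $\mathit{dom}:N\to 2^{\mathit{Proc}}\setminus\{\emptyset\}$, there are two distinguished nodes $n_{\mathit{init}},n_{\mathit{fin}}$ with $\mathit{dom}(n_{\mathit{init}})=\mathit{dom}(n_{\mathit{fin}})=\mathit{Proc}$, $R$ is a set of results, each node $n$ has a set $\mathit{out}(n)\subseteq R$ of results (nonempty for $n\neq n_{\mathit{fin}}$), and $\delta(n,a,p)\subseteq N$ is defined and nonempty exactly when $a\in\mathit{out}(n)$ and $p\in\mathit{dom}(n)$, with $p\in\mathit{dom}(n')$ for all $n'\in\delta(n,a,p)$. $\mathcal{N}$ is deterministic if every $\delta(n,a,p)$ is a singleton. A configuration is a map $C$ assigning to each process a nonempty set of nodes; $C_{\mathit{init}}(p)=\{n_{\mathit{init}}\}$, $C_{\mathit{fin}}(p)=\{n_{\mathit{fin}}\}$. A node $n$ is enabled in $C$ if $n\in C(p)$ for all $p\in\mathit{dom}(n)$. If $n$ is enabled and $a\in\mathit{out}(n)$ then $C\xrightarrow{(n,a)}C'$ with $C'(p)=\delta(n,a,p)$ for $p\in\mathit{dom}(n)$,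 $C'(p)=C(p)$ otherwise. A run is a sequence $(n_1,a_1)(n_2,a_2)\cdots$ of such steps, and it contains $n$ if $n=n_i$ for some $i$; a configuration is reachable if some finite run from $C_{\mathit{init}}$ leads to it; $\mathcal{N}$ is sound if every finite run from $C_{\mathit{init}}$ can be extended to a finite run ending in $C_{\mathit{fin}}$. The graph of $\mathcal{N}$ has vertex set $N$ and edges $n\xrightarrow{p,a}n'$ whenever $n'\in\delta(n,a,p)$; $\mathcal{N}$ is acyclic if this graph is; a local path is a path in this graph. $m\parallel n$ means $\mathit{dom}(m)\cap\mathit{dom}(n)=\emptyset$ and some reachable configuration enables both $m$ and $n$. *)

(* Defs.v *)
From mathcomp Require Import all_boot.
Set Implicit Arguments. Unset Strict Implicit. Unset Printing Implicit Defensive.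

Record negotiation (Proc Node Res : finType) := Negotiation {
  dom : Node -> {set Proc};
  n_init : Node;
  n_fin : Node;
  out : Node -> {set Res};
  delta : Node -> Res -> Proc -> {set Node}
}.

Section Neg.
Variables (Proc Node Res : finType) (Ng : negotiation Proc Node Res).

(* Well-formedness conditions of the definition of a negotiation.
   delta n a p is "undefined" (represented by set0) outside a \in out n, p \in dom n. *)
Definition wf_negotiation : Prop :=
  [/\ (forall n, dom Ng n != set0),
      dom Ng (n_init Ng) = [set: Proc] /\
      dom Ng (n_fin Ng) = [set: Proc],
      (forall n, n != n_fin Ng -> out Ng n != set0),
      (forall n a p, (delta Ng n a p != set0) = (a \in out Ng n) && (p \in dom Ng n))
    & (forall n a p n', n' \in delta Ng n a p -> p \in dom Ng n')].

Definition deterministic : Prop :=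
  forall n a p, a \in out Ng n -> p \in dom Ng n -> #|delta Ng n a p| = 1.

Definition config := {ffun Proc -> {set Node}}.

Definition C_init : config := [ffun _ => [set n_init Ng]].
Definition C_fin : config := [ffun _ => [set n_fin Ng]].

Definition enabled (C : config) (n : Node) : Prop :=
  forall p, p \in dom Ng n -> n \in C p.

Definition step (C : config) (n : Node) (a : Res) (C' : config) : Prop :=
  [/\ enabled C n, a \in out Ng n &
      C' = [ffun p => if p \in dom Ng n then delta Ng n a p else C p]].

Fixpoint leads (C : config) (s : seq (Node * Res)) (C' : config) : Prop :=
  match s with
  | [::] => C = C'
  | (n, a) :: s' => exists C1, step C n a C1 /\ leads C1 s' C'
  end.

Definition reachable (C : config) : Prop := exists s, leads C_init s C.

Definition sound : Prop :=
  forall s C, leads C_init s C -> exists s', leads C s' C_fin.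

Definition edge : rel Node :=
  fun n n' => [exists p, exists a, n' \in delta Ng n a p].

Definition acyclic : Prop := forall n n', edge n n' -> ~~ connect edge n' n.

Definition local_path (m n : Node) : bool := connect edge m n.

Definition parallel (m n : Node) : Prop :=
  dom Ng m :&: dom Ng n = set0 /\
  exists C, [/\ reachable C, enabled C m & enabled C n].

End Neg.

(* Main.v *)
Require Import Defs.
From mathcomp Require Import all_boot.
Set Implicit Arguments. Unset Strict Implicit. Unset Printing Implicit Defensive.

Section Aux.
Variables (Proc Node Res : finType) (Ng : negotiation Proc Node Res).

Lemma leads_cat C s1 C1 s2 C2 : leads Ng C s1 C1 -> leads Ng C1 s2 C2 ->
  leads Ng C (s1 ++ s2) C2.
Proof.
elim: s1 C => [|[x a] s1 IH] C /=; first by move=> ->.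
case=> C' [st l] l2; exists C'; split=> //; exact: IH l l2.
Qed.

Lemma reach_leads C s C' : reachable Ng C -> leads Ng C s C' -> reachable Ng C'.
Proof. case=> s0 h l; exists (s0 ++ s); exact: leads_cat h l. Qed.

Lemma reach_step C x a C' : reachable Ng C -> step Ng C x a C' -> reachable Ng C'.
Proof. move=> r st; apply: (reach_leads (s := [:: (x, a)])) r _; by exists C'. Qed.

Definition uniqC (C : config Proc Node) :=
  forall p x y, x \in C p -> y \in C p -> x = y.

Lemma step_val C x a C' p : step Ng C x a C' ->
  C' p = if p \in dom Ng x then delta Ng x a p else C p.
Proof. by case=> _ _ ->; rewrite ffunE. Qed.

Lemma edgeI x a p y : y \in delta Ng x a p -> edge Ng x y.
Proof. by move=> h; apply/existsP; exists p; apply/existsP; exists a. Qed.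

Lemma uniq_leads (det : deterministic Ng) C0 s C :
  uniqC C0 -> leads Ng C0 s C -> uniqC C.
Proof.
elim: s C0 => [|[x a] s IH] C0 u /=; first by move<-.
case=> C1 [st l]; apply: (IH C1) l => p y z.
rewrite !(step_val _ st); case: ifP => [pd|_]; last exact: u.
case: st => en ao _.
move: (det _ _ _ ao pd) => /eqP/cards1P [w ->].
by rewrite !inE => /eqP-> /eqP->.
Qed.

Lemma uniq_reach (det : deterministic Ng) C : reachable Ng C -> uniqC C.
Proof.
case=> s; apply: uniq_leads => // p y z.
by rewrite /C_init !ffunE !inE => /eqP-> /eqP->.
Qed.

Lemma leads_path C s C' p y : leads Ng C s C' -> y \in C' p ->
  exists2 x, x \in C p & connect (edge Ng) x y.
Proof.
elim: s C => [|[x a] s IH] C /=; first by move=> -> yC; exists y.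
case=> C1 [st l] yC. have [z zC1 cz] := IH _ l yC.
move: zC1; rewrite (step_val _ st); case: ifP => [pd zd|_ zC]; last by exists z.
case: st => en _ _. exists x; first exact: en.
apply: connect_trans cz; apply: connect1; exact: edgeI zd.
Qed.

Lemma reach_enable (snd : sound Ng) (det : deterministic Ng) C p y :
  reachable Ng C -> y \in C p ->
  exists s C', leads Ng C s C' /\ enabled Ng C' y.
Proof.
move=> rC; have [s0 l0] := rC; have [s l] := snd _ _ l0.
elim: s C rC {s0 l0} l => [|[x a] s IH] C rC /=.
- move=> ->; rewrite /C_fin ffunE inE => /eqP ->.
  exists [::], (C_fin Ng); split => // q _; by rewrite ffunE inE.
- case=> C1 [st l] yC.
  case: (eqVneq x y) => [<-|nxy].
  + exists [::], C; split => //; by case: st.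
  + have yC1 : y \in C1 p.
      rewrite (step_val _ st); case: ifP => // pd.
      case: st => en _ _; by rewrite (uniq_reach det rC (en _ pd) yC) eqxx in nxy.
    have [s' [C' [l' en']]] := IH C1 (reach_step rC st) l yC1.
    exists ((x,a)::s'), C'; split => //; by exists C1; split.
Qed.

Lemma path_enable (snd : sound Ng) (det : deterministic Ng) (wf : wf_negotiation Ng)
  C x z : reachable Ng C -> enabled Ng C x -> connect (edge Ng) x z ->
  exists s C', leads Ng C s C' /\ enabled Ng C' z.
Proof.
move=> rC ex /connectP [pth pp ->].
elim: pth x C rC ex pp => [|y pth IH] x C rC ex /=; first by exists [::], C.
case/andP => exy pp.
move: exy; rewrite /edge => /existsP [p /existsP [a yd]].
have /andP [ao pd] : (a \in out Ng x) && (p \in dom Ng x).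
  case: wf => _ _ _ hd _; rewrite -hd; apply/set0Pn; by exists y.
set C1 := [ffun q => if q \in dom Ng x then delta Ng x a q else C q].
have st : step Ng C x a C1 by split.
have yC1 : y \in C1 p by rewrite ffunE pd.
have [s1 [C2 [l1 en2]]] := reach_enable snd det (reach_step rC st) yC1.
have rC2 : reachable Ng C2 := reach_leads (reach_step rC st) l1.
have [s2 [C3 [l2 en3]]] := IH y C2 rC2 en2 pp.
exists ((x,a) :: s1 ++ s2), C3; split => //. exists C1; split => //.
exact: leads_cat l1 l2.
Qed.

Lemma no_path (wf : wf_negotiation Ng) (ac : acyclic Ng) (det : deterministic Ng)
  (snd : sound Ng) C m n : reachable Ng C -> enabled Ng C m -> enabled Ng C n ->
  m != n -> ~ connect (edge Ng) m n.
Proof.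
move=> rC em en mn /connectP [pth pp lst].
move: pp lst; case/lastP: pth => [_ /= mn'|q n']; first by rewrite mn' eqxx in mn.
rewrite last_rcons rcons_path => /andP [pq ewn] en'; subst n'.
set w := last m q in ewn.
have cmw : connect (edge Ng) m w by apply/connectP; exists q.
move: (ewn); rewrite /edge => /existsP [p /existsP [a nd]].
have [pw pn] : p \in dom Ng w /\ p \in dom Ng n.
  case: wf => _ _ _ hd hdom; split; last exact: hdom nd.
  have : (a \in out Ng w) && (p \in dom Ng w) by rewrite -hd; apply/set0Pn; exists n.
  by case/andP.
have [s [C' [l enw]]] := path_enable snd det wf rC em cmw.
have [y yC cyw] := leads_path l (enw _ pw).
have yn := uniq_reach det rC yC (en _ pn); subst y.
by move: (ac _ _ ewn); rewrite cyw.
Qed.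

Lemma lemF (C D : config Proc Node) (T : {set Proc}) s D' m n : reachable Ng C -> enabled Ng C m -> dom Ng m \subset T ->
  (forall p, p \notin T -> C p = D p) ->
  (forall p y, p \in T -> y \in D p -> connect (edge Ng) m y) ->
  leads Ng D s D' -> n \in map fst s -> ~ connect (edge Ng) m n ->
  exists C', [/\ reachable Ng C', enabled Ng C' m & enabled Ng C' n].
Proof.
elim: s C D T => [|[x a] s IH] C D T rC em sT agr tn //= [D1 [st l]].
rewrite inE => ns nc.
case: st => ex ao D1E.
case: (eqVneq n x) => [nx|nnx].
  subst x.
  have [hT|hT] := boolP [exists p, (p \in dom Ng n) && (p \in T)].
    case/existsP: hT => p /andP [pd pT]; by case: nc; apply: tn pT (ex _ pd).
  exists C; split => // p pd; rewrite agr ?ex //.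
  apply/negP => pT; move/negP: hT; apply; apply/existsP; exists p; by rewrite pd.
rewrite (negbTE nnx) /= in ns.
have [hT|hT] := boolP [exists p, (p \in dom Ng x) && (p \in T)].
  case/existsP: hT => p0 /andP [p0d p0T].
  have cmx := tn _ _ p0T (ex _ p0d).
  apply: (IH C D1 (T :|: dom Ng x)) => //.
  - by apply: subset_trans sT (subsetUl _ _).
  - move=> p; rewrite inE negb_or => /andP [pT pd].
    by rewrite D1E ffunE (negbTE pd) agr.
  - move=> p y; rewrite D1E ffunE inE; case: ifP => pd.
      move=> _ yd; apply: connect_trans cmx _; apply: connect1; exact: edgeI yd.
    by rewrite orbF; apply: tn.
have dxT : forall p, p \in dom Ng x -> p \notin T.
  move=> p pd; apply/negP => pT; move/negP: hT; apply; apply/existsP; exists p.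
  by rewrite pd.
set C1 := [ffun q => if q \in dom Ng x then delta Ng x a q else C q].
have st : step Ng C x a C1.
  split => // p pd; rewrite agr ?ex //; exact: dxT.
apply: (IH C1 D1 T) => //.
- exact: reach_step rC st.
- move=> p pm; rewrite ffunE.
  have pT : p \in T := subsetP sT _ pm.
  case: ifP => pd; last exact: em.
  by move: (dxT _ pd); rewrite pT.
- move=> p pT; rewrite D1E !ffunE; case: ifP => // _; exact: agr.
- move=> p y pT; rewrite D1E ffunE; case: ifP => pd.
    by move: (dxT _ pd); rewrite pT.
  exact: tn.
Qed.

Lemma lemG m n : m != n -> ~ connect (edge Ng) m n -> ~ connect (edge Ng) n m ->
  forall s C C', reachable Ng C -> leads Ng C s C' -> m \in map fst s ->
  n \in map fst s ->
  exists C'', [/\ reachable Ng C'', enabled Ng C'' m & enabled Ng C'' n].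
Proof.
move=> mn nmn nnm; elim=> [|[x a] s IH] C C' rC //= [C1 [st l]].
rewrite !inE.
have tnx : forall y p, p \in dom Ng x -> y \in C1 p -> connect (edge Ng) x y.
  move=> y p pd; rewrite (step_val _ st) pd => yd; apply: connect1; exact: edgeI yd.
have agx : forall p, p \notin dom Ng x -> C p = C1 p.
  by move=> p pd; rewrite (step_val _ st) (negbTE pd).
case: (eqVneq m x) => [mx|mxn] /=.
  subst x => _; rewrite eq_sym (negbTE mn) /= => ns.
  case: (st) => em _ _.
  apply: (lemF rC em (subxx _) agx _ l ns nmn) => p y pd; exact: tnx pd.
case: (eqVneq n x) => [nx|nxn] /= ms.
  subst x => _.
  case: (st) => en _ _.
  have [C'' [r a1 a2]] := lemF rC en (subxx _) agx (fun p y pd => tnx y p pd) l ms nnm.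
  by exists C''.
move=> ns; exact: IH C1 C' (reach_step rC st) l ms ns.
Qed.

End Aux.

Theorem proposition6p3 (Proc Node Res : finType) (Ng : negotiation Proc Node Res) :
  wf_negotiation Ng -> acyclic Ng -> deterministic Ng -> sound Ng ->
  forall m n : Node, dom Ng m :&: dom Ng n = set0 ->
  (parallel Ng m n <->
   ((exists (s : seq (Node * Res)) (C : config Proc Node),
        leads Ng (C_init Ng) s C /\ m \in map fst s /\ n \in map fst s) /\
    ~ local_path Ng m n /\ ~ local_path Ng n m)).
Proof.
move=> wf ac det snd m n dmn.
have wf' := wf; case: wf' => dne [_ dfin] outne _ _.
have mn : m != n.
  apply/eqP => e; subst; move: dmn; rewrite setIid => h; by move: (dne n); rewrite h eqxx.
split.
- case=> _ [C [rC em en]]; split; last split.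
  + have mfin : m != n_fin Ng.
      apply/eqP=> e; move: dmn; rewrite e dfin setTI => h; by move: (dne n); rewrite h eqxx.
    have nfin : n != n_fin Ng.
      apply/eqP=> e; move: dmn; rewrite e dfin setIT => h; by move: (dne m); rewrite h eqxx.
    have /set0Pn [a ao] := outne m mfin.
    have /set0Pn [b bo] := outne n nfin.
    set C1 := [ffun q => if q \in dom Ng m then delta Ng m a q else C q].
    have st1 : step Ng C m a C1 by split.
    have en1 : enabled Ng C1 n.
      move=> p pd; rewrite ffunE; case: ifP => pm; last exact: en.
      have : p \in dom Ng m :&: dom Ng n by rewrite inE pm pd.
      by rewrite dmn inE.
    set C2 := [ffun q => if q \in dom Ng n then delta Ng n b q else C1 q].
    have st2 : step Ng C1 n b C2 by split.
    case: rC => s0 l0.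
    exists (s0 ++ [:: (m,a); (n,b)]), C2; split.
      apply: leads_cat l0 _; exists C1; split => //; exists C2; split => //.
    by rewrite map_cat !mem_cat /= !inE !eqxx !orbT.
  + move=> h; exact: (no_path wf ac det snd rC em en mn h).
  + move=> h; have nm : n != m by rewrite eq_sym.
    exact: (no_path wf ac det snd rC en em nm h).
- case=> [[s [C [l [ms ns]]]] [nmn nnm]]; split => //.
  have r0 : reachable Ng (C_init Ng) by exists [::].
  have [C'' [? ? ?]] := lemG mn nmn nnm r0 l ms ns.
  by exists C''.
Qed.
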